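(* Let $G$ be a finite abelian group of even order, $S$ a symmetric generating set, and $s\in S$ such that $|G'|\ge4$ is even. (1) If $(s,t,s^{-1},t^{-1})\in\mathcal H$ for every $t\in S'$, then $\mathcal H'\subseteq\mathcal H$. (2) If $2(s,t,s^{-1},t^{-1})\in\mathcal H$ for every $t\in S'$, then $2\mathcal H'\subseteq\mathcal H$.
   Context: $X=\mathrm{Cay}(G;S)$ has vertex set $G$ and edges $\{g,gs\}$. For the chosen $s$: $S'=S\setminus\{s,s^{-1}\}$, $G'=\langle S'\rangle$, $X'=\mathrm{Cay}(G';S')$. A flow is $f:G\times S\to\mathbb Z$ with $f(v,a)=-f(va,a^{-1})$ and $\sum_af(v,a)=0$; closed walks $(t_1,\dots,t_n)$ (visiting $e,t_1,t_1t_2,\dots$) are identified with flows ($+1$ on traversed oriented edges, $-1$ on reversals). $\mathcal H$ is the subgroup of flows on $X$ generated by oriented hamiltonian cycles of $X$; $\mathcal H'$ is the subgroup of flows on $X'$ generated by oriented hamiltonian cycles of $X'$, regarded as flows on $X$ by extending by $0$. *)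

(* Defs.v *)
From mathcomp Require Import all_boot all_order all_algebra all_fingroup.
Set Implicit Arguments. Unset Strict Implicit. Unset Printing Implicit Defensive.
Import GRing.Theory Num.Theory.
Local Open Scope ring_scope.

Section CayleyFlows.
Variable gT : finGroupType.

(* A walk from the identity is the sequence of its steps (t_1,...,t_n).
   Its vertices are e, t_1, t_1 t_2, ..., t_1...t_{n-1} (the starting
   vertex of each step). *)
Definition walk_vertices (t : seq gT) : seq gT :=
  take (size t) (1%g :: scanl (fun x y => (x * y)%g) 1%g t).

Definition walk_edges (t : seq gT) : seq (gT * gT) := zip (walk_vertices t) t.

(* Flows are functions
   G x S -> Z, represented as functions gT -> gT -> int (zero off G x S). *)
Definition walk_flow (t : seq gT) (v a : gT) : int :=
  (count (pred1 (v, a)) (walk_edges t))%:Z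
  - (count (pred1 ((v * a)%g, a^-1%g)) (walk_edges t))%:Z.

Definition is_ham_cycle (V S : {set gT}) (t : seq gT) : Prop :=
  [/\ all (fun x => x \in S) t,
      size t = #|V|,
      uniq (walk_vertices t)
    & foldl (fun x y => (x * y)%g) 1%g t = 1%g].

Definition in_ham_span (V S : {set gT}) (f : gT -> gT -> int) : Prop :=
  exists l : seq (int * seq gT),
    (forall p, p \in l -> is_ham_cycle V S p.2) /\
    (forall v a, f v a = \sum_(p <- l) p.1 * walk_flow p.2 v a).

End CayleyFlows.

(* Main.v *)
Require Import Defs.
From mathcomp Require Import all_boot all_order all_algebra all_fingroup.
From mathcomp Require Import cyclic.
From mathcomp Require Import zify ring.
Set Implicit Arguments. Unset Strict Implicit. Unset Printing Implicit Defensive.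
Import GRing.Theory Num.Theory.
Local Open Scope ring_scope.

Section Walks.
Variable gT : finGroupType.
Implicit Types (x y z a b v c : gT) (t : seq gT).

Fixpoint wv x t : seq gT := if t is a :: t' then x :: wv (x * a)%g t' else [::].
Definition ed x b v a : int :=
  (((x, b) == (v, a)) : nat)%:Z - (((x, b) == ((v * a)%g, a^-1%g)) : nat)%:Z.
Fixpoint wf x t v a : int := if t is b :: t' then ed x b v a + wf (x * b)%g t' v a else 0.
Definition gprod x t := foldl (fun x y => (x * y)%g) x t.

Lemma wv_take x t : take (size t) (x :: scanl (fun x y => (x * y)%g) x t) = wv x t.
Proof. by elim: t x => [|a t IH] x //=; rewrite IH. Qed.

Lemma walk_vertices_wv t : walk_vertices t = wv 1%g t.
Proof. exact: wv_take. Qed.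

Lemma wf_count x t v a : wf x t v a =
  (count (pred1 (v, a)) (zip (wv x t) t))%:Z
  - (count (pred1 ((v * a)%g, a^-1%g)) (zip (wv x t) t))%:Z.
Proof.
elim: t x => [|b t IH] x /=; first by [].
rewrite IH /ed !PoszD. ring.
Qed.

Lemma walk_flow_wf t v a : walk_flow t v a = wf 1%g t v a.
Proof. by rewrite wf_count /walk_flow /walk_edges walk_vertices_wv. Qed.

Lemma gprod_cons x a t : gprod x (a :: t) = gprod (x * a)%g t.
Proof. by []. Qed.

Lemma gprod_cat x t1 t2 : gprod x (t1 ++ t2) = gprod (gprod x t1) t2.
Proof. exact: foldl_cat. Qed.

Lemma wf_cat x t1 t2 v a : wf x (t1 ++ t2) v a = wf x t1 v a + wf (gprod x t1) t2 v a.
Proof. by elim: t1 x => [|b t IH] x /=; rewrite ?add0r // IH addrA. Qed.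

Lemma wv_cat x t1 t2 : wv x (t1 ++ t2) = wv x t1 ++ wv (gprod x t1) t2.
Proof. by elim: t1 x => [|b t IH] x //=; rewrite IH. Qed.

Lemma size_wv x t : size (wv x t) = size t.
Proof. by elim: t x => [|b t IH] x //=; rewrite IH. Qed.

Lemma ed_trans y x b v a : ed (y * x)%g b v a = ed x b (y^-1 * v)%g a.
Proof.
rewrite /ed !xpair_eqE.
have E : forall w, (y * x == w)%g = (x == y^-1 * w)%g.
  by move=> w; apply/eqP/eqP => [<-|->]; rewrite ?mulKg ?mulKVg.
by rewrite !E mulgA.
Qed.

Lemma wf_trans y x t v a : wf (y * x)%g t v a = wf x t (y^-1 * v)%g a.
Proof. by elim: t x => [|b t IH] x //=; rewrite ed_trans -mulgA IH. Qed.

Lemma wv_trans y x t : wv (y * x)%g t = map (mulg y) (wv x t).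
Proof. by elim: t x => [|b t IH] x //=; rewrite -mulgA IH. Qed.

Lemma gprod_trans y x t : gprod (y * x)%g t = (y * gprod x t)%g.
Proof. by elim: t x => [|b t IH] x //=; rewrite -mulgA IH. Qed.

Lemma ed_rev x b v a : ed (x * b)%g b^-1 v a = - ed x b v a.
Proof.
rewrite /ed !xpair_eqE.
have E1 : ((x * b == v) && (b^-1 == a))%g = ((x == v * a) && (b == a^-1))%g.
  apply/andP/andP => [[/eqP <- /eqP <-]|[/eqP -> /eqP ->]]; by rewrite ?invgK ?mulgK.
have E2 : ((x * b == v * a) && (b^-1 == a^-1))%g = ((x == v) && (b == a))%g.
  apply/andP/andP => [[/eqP E /eqP F]|[/eqP -> /eqP ->]]; last by [].
  by move/invg_inj: F => F; subst; move/mulIg: E => ->.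
rewrite E1 E2; ring.
Qed.

End Walks.
Section Span.
Variable gT : finGroupType.
Variables (V S : {set gT}).
Implicit Types (f g : gT -> gT -> int).

Lemma span_ext f g : (forall v a, f v a = g v a) -> in_ham_span V S f -> in_ham_span V S g.
Proof. by move=> E [l [H1 H2]]; exists l; split=> // v a; rewrite -E H2. Qed.

Lemma span0 : in_ham_span V S (fun _ _ => 0).
Proof. by exists [::]; split=> // v a; rewrite big_nil. Qed.

Lemma spanD f g : in_ham_span V S f -> in_ham_span V S g ->
  in_ham_span V S (fun v a => f v a + g v a).
Proof.
move=> [l1 [H1 E1]] [l2 [H2 E2]]; exists (l1 ++ l2); split.
  by move=> p; rewrite mem_cat => /orP [/H1|/H2].
by move=> v a; rewrite big_cat E1 E2.
Qed.

Lemma spanZ k f : in_ham_span V S f -> in_ham_span V S (fun v a => k * f v a).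
Proof.
move=> [l [H1 E1]]; exists (map (fun p => (k * p.1, p.2)) l); split.
  by move=> p /mapP [q Hq ->] /=; apply: H1.
by move=> v a; rewrite big_map E1 mulr_sumr; apply: eq_bigr => p _; rewrite mulrA.
Qed.

Lemma spanB f g : in_ham_span V S f -> in_ham_span V S g ->
  in_ham_span V S (fun v a => f v a - g v a).
Proof.
move=> Hf Hg; apply: (span_ext _ (spanD Hf (spanZ (-1) Hg))) => v a; ring.
Qed.

Lemma span_cycle p : is_ham_cycle V S p -> in_ham_span V S (walk_flow p).
Proof.
move=> H; exists [:: (1, p)]; split; first by move=> q; rewrite inE => /eqP ->.
by move=> v a; rewrite big_cons big_nil mul1r addr0.
Qed.

End Span.

Section Rot.
Variable gT : finGroupType.
Implicit Types (x y z a b v c : gT) (t : seq gT).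

Lemma wv_sub (H : {group gT}) x t : x \in H -> all (fun a => a \in H) t ->
  {subset wv x t <= H} /\ gprod x t \in H.
Proof.
elim: t x => [|b t IH] x Hx /=; first by [].
move=> /andP [Hb Ht]; have [IH1 IH2] := IH _ (groupM Hx Hb) Ht.
split=> // y; rewrite inE => /orP [/eqP ->|] //; exact: IH1.
Qed.

Lemma wv_split x t z : z \in wv x t -> exists t1 t2, t = t1 ++ t2 /\ gprod x t1 = z.
Proof.
elim: t x => [|b t IH] x //=; rewrite inE => /orP [/eqP ->|].
  by exists [::], (b :: t).
by move=> /IH [t1 [t2 [-> E]]]; exists (b :: t1), t2.
Qed.

Lemma ham_cover (V : {group gT}) (S : {set gT}) t : S \subset V -> is_ham_cycle V S t ->
  {subset V <= wv 1%g t}.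
Proof.
move=> SV [Ha Hs Hu Hp]; rewrite walk_vertices_wv in Hu.
have Ha' : all (fun a => a \in V) t.
  by apply/allP => a Ha1; apply: (subsetP SV); exact: (allP Ha).
have [Hsub _] := wv_sub (group1 V) Ha'.
have Hc : #|[pred x | x \in wv 1%g t]| = #|V|.
  by rewrite (card_uniqP Hu) size_wv Hs.
have : [pred x | x \in wv 1%g t] \subset V by apply/subsetP => z; exact: Hsub.
move/subset_leqif_card => [_]; rewrite Hc eqxx => /esym /subsetP W z Hz.
exact: (W z Hz).
Qed.

Lemma ham_rot (V : {group gT}) (S : {set gT}) t y : S \subset V -> is_ham_cycle V S t -> y \in V ->
  exists t', is_ham_cycle V S t' /\
    forall v a, walk_flow t' v a = walk_flow t (y^-1 * v)%g a.
Proof.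
move=> SV Hh Hy; have Hc := ham_cover SV Hh.
have [Ha Hs Hu Hp] := Hh.
have [T [D [Et Eu]]] := wv_split (Hc _ (groupVr Hy)).
have Hp' : gprod 1 t = 1%g by exact: Hp.
have ED : gprod 1%g D = y.
  move: Hp'; rewrite Et gprod_cat Eu -[y^-1%g]mulg1 gprod_trans.
  by move/eqP; rewrite -eq_mulVg1 eq_sym => /eqP.
exists (D ++ T); split.
- split.
  + by move: Ha; rewrite Et !all_cat andbC.
  + by rewrite size_cat addnC -size_cat -Et.
  + rewrite walk_vertices_wv wv_cat ED uniq_catC.
    move: Hu; rewrite walk_vertices_wv Et wv_cat Eu => Hu.
    have -> : wv y T = map (mulg y) (wv 1 T) by rewrite -wv_trans mulg1.
    have -> : wv 1 D = map (mulg y) (wv y^-1 D) by rewrite -wv_trans mulgV.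
    by rewrite -map_cat (map_inj_uniq (mulgI y)).
  + change (gprod 1 (D ++ T) = 1%g).
    by rewrite gprod_cat ED -[y]mulg1 gprod_trans Eu mulgV.
- move=> v a; rewrite !walk_flow_wf Et !wf_cat Eu ED.
  rewrite -{1}[y]mulg1 wf_trans -{1}[1%g](mulgV y) wf_trans.
  by rewrite addrC.
Qed.

Lemma span_trans (V : {group gT}) (S : {set gT}) f y : S \subset V -> y \in V ->
  in_ham_span V S f -> in_ham_span V S (fun v a => f (y^-1 * v)%g a).
Proof.
move=> SV Hy [l [H1 E1]].
apply: (span_ext (f := fun v a => \sum_(p <- l) p.1 * walk_flow p.2 (y^-1 * v)%g a)).
  by move=> v a; rewrite E1.
elim: l H1 {E1} => [|p l IH] H1.
  by apply: span_ext (span0 _ _) => v a; rewrite big_nil.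
have [t' [Ht' Et']] := ham_rot SV (H1 p (mem_head _ _)) Hy.
have IH' := IH (fun q Hq => H1 q (mem_behead (s := p :: l) Hq)).
apply: span_ext (spanD (spanZ p.1 (span_cycle Ht')) IH') => v a.
by rewrite big_cons Et'.
Qed.

End Rot.
Section Snake.
Variable gT : finGroupType.
Implicit Types (x y z a b v c : gT) (t p q : seq gT).

Lemma even_ind (P : seq gT -> Prop) : P [::] -> (forall a b q, P q -> P [:: a, b & q]) ->
  forall p, ~~ odd (size p) -> P p.
Proof.
move=> H0 H2 p; move: {2}(size p) (leqnn (size p)) => n.
elim: n p => [|n IH] [|a [|b q]] //= Hs Hodd.
apply: H2; apply: IH; first by lia.
by move: Hodd; rewrite negbK.
Qed.

Lemma nseqS_cat r z : nseq r.+1 z = nseq r z ++ [:: z].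
Proof. by elim: r => [|r IH] //=; rewrite -IH. Qed.

Lemma gprod_nseq x z r : gprod x (nseq r z) = (x * z ^+ r)%g.
Proof. by elim: r x => [|r IH] x /=; rewrite ?mulg1 // IH expgS mulgA. Qed.

Variable s : gT.

Definition block r a b := nseq r s ++ a :: nseq r s^-1%g ++ [:: b].
Fixpoint snake r p := if p is a :: b :: q then block r a b ++ snake r q else [::].
Definition sq x a v c := wf x [:: s; a; s^-1; a^-1]%g v c.
Fixpoint SQ r x p v c : int := if p is a :: b :: q then
  \sum_(j < r) sq (x * s ^+ j)%g a v c + SQ r (x * a * b)%g q v c else 0.

Lemma gprod_mid x r a : commute s a ->
  gprod x (nseq r s ++ a :: nseq r s^-1%g) = (x * a)%g.
Proof.
move=> Hc; rewrite gprod_cat gprod_nseq gprod_cons gprod_nseq expVgn.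
by rewrite -(mulgA x) -(commuteX r (commute_sym Hc)) mulgA mulgK.
Qed.

Lemma block_eq r a b : block r a b = (nseq r s ++ a :: nseq r s^-1%g) ++ [:: b].
Proof. by rewrite /block -catA. Qed.

Lemma gprod_block x r a b : commute s a -> gprod x (block r a b) = (x * a * b)%g.
Proof. by move=> Hc; rewrite block_eq gprod_cat gprod_mid. Qed.

Lemma sq_eq x a v c : commute s a ->
  sq x a v c = ed x s v c + ed (x * s) a v c + ed (x * s * a) s^-1 v c - ed x a v c.
Proof.
move=> Hc; rewrite /sq /=.
have -> : (x * s * a * s^-1 = x * a)%g by rewrite -(mulgA x) Hc mulgA mulgK.
rewrite ed_rev; ring.
Qed.

Lemma wf_mid r x a v c : commute s a ->
  wf x (nseq r s ++ a :: nseq r s^-1%g) v c = ed x a v c + \sum_(j < r) sq (x * s ^+ j)%g a v c.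
Proof.
move=> Hc; elim: r x => [|r IH] x; first by rewrite /= big_ord0 !addr0.
rewrite [nseq r.+1 s^-1%g]nseqS_cat /=.
have -> : nseq r s ++ a :: nseq r s^-1%g ++ [:: s^-1%g] = (nseq r s ++ a :: nseq r s^-1%g) ++ [:: s^-1%g].
  by rewrite -catA.
rewrite wf_cat IH gprod_mid // big_ord_recl /= expg0 mulg1 sq_eq //.
have -> : \sum_(i < r) sq (x * s ^+ (bump 0 i))%g a v c = \sum_(i < r) sq (x * s * s ^+ i)%g a v c.
  by apply: eq_bigr => i _; rewrite /bump /= add1n expgS mulgA.
ring.
Qed.

Lemma wf_block r x a b v c : commute s a ->
  wf x (block r a b) v c = ed x a v c + ed (x * a) b v c + \sum_(j < r) sq (x * s ^+ j)%g a v c.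
Proof.
move=> Hc; rewrite block_eq wf_cat wf_mid // gprod_mid //= addr0; ring.
Qed.

Lemma wf_snake r x p v c : ~~ odd (size p) -> (forall a, a \in p -> commute s a) ->
  wf x (snake r p) v c = wf x p v c + SQ r x p v c.
Proof.
move=> Hp Hc; move: p Hp x Hc; apply: even_ind => [|a b q IH] x Hc /=; first by rewrite addr0.
have Ha : commute s a by apply: Hc; rewrite mem_head.
rewrite wf_cat wf_block // gprod_block // IH; last by move=> d Hd; apply: Hc; rewrite !inE Hd !orbT.
ring.
Qed.

Lemma gprod_snake r x p : ~~ odd (size p) -> (forall a, a \in p -> commute s a) ->
  gprod x (snake r p) = gprod x p.
Proof.
move=> Hp Hc; move: p Hp x Hc; apply: even_ind => [|a b q IH] x Hc //=.
rewrite gprod_cat gprod_block ?IH //; first by move=> d Hd; apply: Hc; rewrite !inE Hd !orbT.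
by apply: Hc; rewrite mem_head.
Qed.

Lemma size_snake r p : ~~ odd (size p) -> size (snake r p) = (r.+1 * size p)%N.
Proof.
move: p; apply: even_ind => [|a b q IH] //=; first by rewrite muln0.
rewrite size_cat IH /block size_cat /= size_cat !size_nseq /=; lia.
Qed.

Lemma all_snake (P : pred gT) r p : ~~ odd (size p) -> all P p -> P s -> P s^-1%g ->
  all P (snake r p).
Proof.
move=> Hp Ha Hs Hs'; move: p Hp Ha; apply: even_ind => [|a b q IH] //= /and3P [Pa Pb Pq].
rewrite all_cat IH // /block all_cat /= all_cat /= Pa Pb !andbT.
by rewrite !all_nseq Hs Hs' !orbT.
Qed.

Lemma memA y z r i (cs : seq gT) : (i <= r)%N -> cs != [::] -> (y * z ^+ i)%g \in wv y (nseq r z ++ cs).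
Proof.
elim: r y i => [|r IH] y i /=.
  by rewrite leqn0 => /eqP -> ; case: cs => // d cs _; rewrite /= expg0 mulg1 mem_head.
case: i => [|i] Hi Hc; first by rewrite expg0 mulg1 mem_head.
by rewrite inE expgS mulgA IH ?orbT.
Qed.

Lemma wv_snake_sub (H : {group gT}) r x p : ~~ odd (size p) -> (forall a, a \in p -> commute s a) ->
   x \in H -> s \in H -> all (fun a => a \in H) p ->
  {subset wv x (snake r p) <= H}.
Proof.
move=> Hp Hc Hx Hs Ha; apply: (proj1 (wv_sub Hx _)).
by apply: all_snake => //; rewrite groupV.
Qed.

Lemma cover_snake r x p v j : ~~ odd (size p) -> (forall a, a \in p -> commute s a) ->
  v \in wv x p -> (j <= r)%N -> (v * s ^+ j)%g \in wv x (snake r p).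
Proof.
move=> Hp Hc Hv Hj; move: p Hp x Hc Hv; apply: even_ind => [|a b q IH] x Hc //=.
have Ha : commute s a by apply: Hc; rewrite mem_head.
rewrite wv_cat gprod_block // mem_cat !inE => /orP [/eqP ->|/orP [/eqP ->|Hv]].
- by rewrite /block memA.
- apply/orP; left; rewrite /block wv_cat mem_cat gprod_nseq /= inE.
  apply/orP; right; apply/orP; right.
  have -> : (x * a * s ^+ j = x * s ^+ r * a * (s^-1) ^+ (r - j))%g.
    have Er : (s ^+ r = s ^+ j * s ^+ (r - j))%g by rewrite -expgD subnKC.
    rewrite expVgn Er (mulgA x) -(mulgA (x * s ^+ j)%g).
    rewrite -(commuteX (r - j) (commute_sym Ha)) mulgA mulgK.
    rewrite -!(mulgA x); congr (_ * _)%g; exact: (commuteX j (commute_sym Ha)).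
  by rewrite memA ?leq_subr.
- apply/orP; right; apply: IH => //; by move=> d Hd; apply: Hc; rewrite !inE Hd !orbT.
Qed.

End Snake.
Section Main.
Variable gT : finGroupType.

Lemma span_sum (V : {set gT}) (S : {set gT}) r (F : nat -> gT -> gT -> int) :
  (forall j, (j < r)%N -> in_ham_span V S (F j)) ->
  in_ham_span V S (fun v c => \sum_(j < r) F j v c).
Proof.
elim: r => [|r IH] H.
  by apply: span_ext (span0 _ _) => v c; rewrite big_ord0.
apply: span_ext (spanD (IH (fun j Hj => H j (ltnW Hj))) (H r (ltnSn r))) => v c.
by rewrite big_ord_recr.
Qed.

Variables (G : {group gT}) (S : {set gT}) (s : gT) (G' : {group gT}) (S' : {set gT}) (k : int).
Hypotheses (abG : abelian G) (SG : S \subset G) (sS : s \in S) (sVS : s^-1%g \in S)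
  (S'S : S' \subset S) (G'G : G' \subset G) (S'G' : S' \subset G').
Hypothesis Hsq : forall t, t \in S' ->
  in_ham_span G S (fun v c => k * walk_flow [:: s; t; s^-1; t^-1]%g v c).

Lemma sG : s \in G. Proof. exact: (subsetP SG). Qed.

Lemma span_SQ r x p : ~~ odd (size p) -> all (fun a => a \in S') p -> x \in G ->
  in_ham_span G S (fun v c => k * SQ s r x p v c).
Proof.
move=> Hp; move: p Hp x; apply: even_ind => [|a b q IH] x /=.
  by move=> _ _; apply: span_ext (span0 _ _) => v c; rewrite mulr0.
move=> /and3P [Ha Hb Hq] Hx.
have aG : a \in G by apply: (subsetP G'G); apply: (subsetP S'G').
have bG : b \in G by apply: (subsetP G'G); apply: (subsetP S'G').
apply: span_ext (spanD (span_sum (r := r) (F := fun j v c => k * sq s (x * s ^+ j)%g a v c) _)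
                       (IH _ Hq (groupM (groupM Hx aG) bG))).
  by move=> v c; rewrite mulrDr mulr_sumr.
move=> j _.
have Hy : (x * s ^+ j)%g \in G by rewrite groupM ?groupX ?sG.
apply: span_ext (span_trans SG Hy (Hsq Ha)) => v c.
by rewrite /sq walk_flow_wf -wf_trans mulg1.
Qed.

Hypothesis cov : G \subset (G' * <[s]>)%g.
Let m := #[coset G' s]%g.
Lemma NG : G \subset 'N(G')%g.
Proof. by apply: normal_norm; rewrite -sub_abelian_normal. Qed.
Lemma sN : s \in 'N(G')%g. Proof. exact: (subsetP NG _ sG). Qed.
Lemma m_gt0 : (0 < m)%N. Proof. exact: order_gt0. Qed.
Lemma sm : (s ^+ m)%g \in G'.
Proof.
apply: coset_idr; first by rewrite groupX // sN.
by rewrite morphX ?sN // expg_order.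
Qed.

Lemma mG : (m * #|G'| <= #|G|)%N.
Proof.
rewrite -(Lagrange G'G) mulnC leq_mul2l -card_quotient ?NG //.
apply/orP; right; apply: dvdn_leq; first exact: cardG_gt0.
by apply: order_dvdG; apply: mem_quotient; exact: sG.
Qed.

Lemma decomp g : g \in G -> exists h j, [/\ h \in G', (j < m)%N & g = (h * s ^+ j)%g].
Proof.
move=> /(subsetP cov) /mulsgP [h z Hh /cycleP [i ->] ->].
exists (h * (s ^+ m) ^+ (i %/ m)%N)%g, (i %% m)%N; split.
- by rewrite groupM // groupX // sm.
- by rewrite ltn_pmod // m_gt0.
- by rewrite -mulgA -expgnA -expgD mulnC -divn_eq.
Qed.

Lemma main_cycle p : ~~ odd #|G'| -> is_ham_cycle G' S' p ->
  in_ham_span G S (fun v c => k * walk_flow p v c).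
Proof.
move=> ev Hh; have [Ha Hs Hu Hp] := Hh.
have Hc : forall a, a \in p -> commute s a.
  move=> a /(allP Ha) aS; have aG : a \in G by apply: (subsetP G'G); apply: (subsetP S'G').
  by apply: (centsP abG) => //; exact: sG.
have Hev : ~~ odd (size p) by rewrite Hs.
set r := m.-1.
have Hr : r.+1 = m by rewrite /r prednK // m_gt0.
set D := snake s r p.
have HD : is_ham_cycle G S D.
  have covD : {subset G <= wv 1%g D}.
    move=> g /decomp [h [j [Hh' Hj ->]]].
    apply: cover_snake => //; first exact: (ham_cover S'G' Hh).
    by rewrite -ltnS Hr.
  have subD : {subset wv 1%g D <= G}.
    apply: wv_snake_sub => //; first exact: sG.
    by apply/allP => a /(allP Ha) aS; apply: (subsetP G'G); apply: (subsetP S'G').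
  have szD : size (wv 1%g D) = (m * #|G'|)%N by rewrite size_wv size_snake // Hr Hs.
  have uD : uniq (wv 1%g D).
    apply: (leq_size_uniq (enum_uniq (mem G))).
      by move=> g; rewrite mem_enum => /covD.
    by rewrite -cardE szD mG.
  split.
  + apply: all_snake => //.
    by apply/allP => a /(allP Ha) aS; apply: (subsetP S'S).
  + apply/eqP; rewrite eqn_leq -{1}(size_wv 1%g D) szD mG andTb.
    rewrite -(size_wv 1%g D) -(card_uniqP uD).
    by apply: subset_leq_card; apply/subsetP => g /covD.
  + by rewrite walk_vertices_wv.
  + change (gprod 1 D = 1%g); rewrite gprod_snake //; exact: Hp.
have H1 := spanZ k (span_cycle HD). have H2 := span_SQ r Hev Ha (group1 G). apply: span_ext (spanB H1 H2).
  move=> v c; rewrite !walk_flow_wf wf_snake //; ring.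
Qed.

End Main.

Unset Implicit Arguments.

Theorem lemma5p9 (gT : finGroupType) (G : {group gT}) (S : {set gT}) (s : gT) :
  abelian G ->
  ~~ odd #|G| ->
  S \subset G ->
  (forall x, x \in S -> x^-1%g \in S) ->
  <<S>>%g = G ->
  s \in S ->
  let S' := S :\: [set s; s^-1%g] in
  let G' := <<S'>>%g in
  (4 <= #|G'|)%N ->
  ~~ odd #|G'| ->
  ((forall t, t \in S' -> in_ham_span G S (walk_flow [:: s; t; s^-1%g; t^-1%g])) ->
     forall f, in_ham_span G' S' f -> in_ham_span G S f)
  /\
  ((forall t, t \in S' ->
      in_ham_span G S (fun v a => 2 * walk_flow [:: s; t; s^-1%g; t^-1%g] v a)) ->
     forall f, in_ham_span G' S' f -> in_ham_span G S (fun v a => 2 * f v a)).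
Proof.
move=> abG _ SG Hsym GS sS S' G' _ evG'.
have sVS : s^-1%g \in S by apply: Hsym.
have S'S : S' \subset S by apply: subsetDl.
have S'G' : S' \subset <<S'>>%G by apply: subset_gen.
have G'G : <<S'>>%G \subset G by rewrite -GS genS.
have cov : G \subset (<<S'>>%G * <[s]>)%g.
  rewrite -comm_joingE; last first.
    apply: centC; apply: (subset_trans G'G); apply: (subset_trans abG).
    by apply: centS; rewrite cycle_subG (subsetP SG).
  rewrite -{1}GS gen_subG; apply/subsetP => x Hx.
  case: (boolP (x \in S')) => H.
    by apply: (subsetP (joing_subl _ _)); apply: mem_gen.
  apply: (subsetP (joing_subr _ _)).
  move: H; rewrite /S' in_setD Hx andbT negbK in_set2 => /orP [/eqP ->|/eqP ->].
    exact: cycle_id.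
  by rewrite groupV cycle_id.
have key : forall k : int, (forall t, t \in S' ->
    in_ham_span G S (fun v c => k * walk_flow [:: s; t; s^-1; t^-1]%g v c)) ->
    forall f, in_ham_span G' S' f -> in_ham_span G S (fun v a => k * f v a).
  move=> k Hsq f [l [H1 E1]].
  apply: (span_ext (f := fun v a => \sum_(p <- l) p.1 * (k * walk_flow p.2 v a))).
    by move=> v a; rewrite E1 mulr_sumr; apply: eq_bigr => p _; ring.
  elim: l H1 {E1} => [|p l IH] H1.
    by apply: span_ext (span0 _ _) => v a; rewrite big_nil.
  have IH' := IH (fun q Hq => H1 q (mem_behead (s := p :: l) Hq)).
  have Hp := main_cycle abG SG sS sVS S'S G'G S'G' Hsq cov evG' (H1 p (mem_head _ _)).
  apply: span_ext (spanD (spanZ p.1 Hp) IH') => v a.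
  by rewrite big_cons.
split.
- move=> Hsq f Hf; apply: span_ext (key 1 _ f Hf) => [v a|t Ht]; first by rewrite mul1r.
  by apply: span_ext (Hsq t Ht) => v a; rewrite mul1r.
- by move=> Hsq f Hf; apply: key.
Qed.
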